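(* Let $I\subset\mathbb R$ be a bounded closed non-degenerate interval and $f\in\bigcap_{r\ge1}L^r(I)$. If $f^-\in L^\infty(I)$ or $f^+\in L^\infty(I)$, then $\lim_{r\to+\infty}\tau_r^f=\frac12\big({\rm essinf}_If+{\rm esssup}_If\big)$ (in $\overline{\mathbb R}$).
   Context: For $f\in L^r(I)$ with $r>1$, $\tau_r^f$ denotes the unique real number minimizing $t\mapsto\|f-t\|_{L^r(I)}$. $f^+=\max\{f,0\}$, $f^-=\max\{-f,0\}$. *)

(* Defs.v *)
From HB Require Import structures.
From mathcomp Require Import all_boot all_order all_algebra.
From mathcomp Require Import all_classical all_reals all_analysis.
From mathcomp Require Import ess_sup_inf hoelder.
Set Implicit Arguments. Unset Strict Implicit. Unset Printing Implicit Defensive.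
Import Order.TTheory GRing.Theory Num.Theory.
Import numFieldNormedType.Exports.
Local Open Scope classical_set_scope.
Local Open Scope ring_scope.

Definition muI (R : realType) (a b : R) :=
  mrestr (@lebesgue_measure R) (measurable_itv `[a, b]).

Definition LnormI (R : realType) (a b : R) (p : \bar R) (g : R -> R) : \bar R :=
  Lnorm (muI a b) p (EFin \o g).

(* tau_r^f : the (unique) real minimizing t |-> ||f - t||_{L^r(I)};
   chosen with xget among the minimizers. *)
Definition tau (R : realType) (a b : R) (f : R -> R) (r : R) : R :=
  xget 0 [set t : R | forall s : R,
     (LnormI a b r%:E (fun x => (f x - t)%R) <= LnormI a b r%:E (fun x => (f x - s)%R))%E].

Definition fpos (R : realType) (f : R -> R) : R -> R := fun x => Num.max (f x) 0.
Definition fneg (R : realType) (f : R -> R) : R -> R := fun x => Num.max (- f x) 0.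

(* Main.v *)
Require Import Defs.
From HB Require Import structures.
From mathcomp Require Import all_boot all_order all_algebra.
From mathcomp Require Import all_classical all_reals all_analysis.
From mathcomp Require Import ess_sup_inf hoelder.
From mathcomp Require Import measurable_realfun.
From mathcomp Require Import ring lra.
Import Order.TTheory GRing.Theory Num.Theory.
Import numFieldNormedType.Exports.
Local Open Scope classical_set_scope.
Local Open Scope ring_scope.

Set Implicit Arguments. Unset Strict Implicit. Unset Printing Implicit Defensive.

Lemma ev_pow {R : realType} (x y a b : R) : 0 <= x -> x < y -> 0 <= a -> 0 < b ->
  \forall r \near +oo, x `^ r * a < y `^ r * b.
Proof.
move=> x0 xy a0 b0.
have y0 : 0 < y by apply: le_lt_trans xy.
have [x00|xpos] := eqVneq x 0.
  rewrite x00; near=> r; rewrite powR0 ?mul0r; first by rewrite mulr_gt0 // powR_gt0.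
  by rewrite gt_eqF //; near: r; apply: nbhs_pinfty_gt; rewrite num_real.
have xp : 0 < x by rewrite lt_neqAle eq_sym xpos x0.
have [a00|apos] := eqVneq a 0.
  by rewrite a00; apply: nearW => r; rewrite mulr0 mulr_gt0 // powR_gt0.
have ap : 0 < a by rewrite lt_neqAle eq_sym apos a0.
set q := ln y - ln x.
have q0 : 0 < q by rewrite subr_gt0 ltr_ln // posrE.
have X := nbhs_pinfty_gt (num_real (ln (a / b) / q)).
apply: filterS X => r hr.
have h1 : ln (a / b) < r * q by rewrite -ltr_pdivrMr.
have h2 : a / b < expR (r * q).
  by rewrite -[X in X < _]lnK ?ltr_expR // posrE divr_gt0.
rewrite /powR (negbTE xpos) gt_eqF //.
have -> : r * ln y = r * ln x + r * q by rewrite /q; ring.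
rewrite expRD -mulrA ltr_pM2l ?expR_gt0 //.
by rewrite -ltr_pdivrMr.
Unshelve. all: by end_near. Qed.

Lemma pt_ineq {R : realType} (y t K A r : R) : 1 <= r -> t <= K ->
  K + 1 - A <= y -> 0 <= A ->
  `|y - (K + 1)| `^ r + (if K + 2 * A + 2 < y then (2 * A + 2) `^ (r - 1) else 0)
  <= `|y - t| `^ r + A `^ r.
Proof.
move=> r1 tK yA A0.
have r0 : 0 <= r by apply: le_trans r1.
have r10 : 0 <= r - 1 by rewrite subr_ge0.
case: ifPn => hy.
- have u0 : 0 <= y - t by lra.
  have us : 0 <= y - (K + 1) by lra.
  rewrite (ger0_norm u0) (ger0_norm us).
  have h1 : (y - (K + 1)) `^ r <= (y - t - 1) `^ r.
    by apply: ge0_ler_powR; rewrite ?nnegrE //; lra.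
  have h2 : (y - t - 1) `^ r = (y - t - 1) * (y - t - 1) `^ (r - 1).
    by rewrite mulr_powRB1 //; [lra | lra].
  have h3 : (y - t - 1) `^ (r - 1) <= (y - t) `^ (r - 1).
    by apply: ge0_ler_powR; rewrite ?nnegrE //; lra.
  have h4 : (2 * A + 2) `^ (r - 1) <= (y - t) `^ (r - 1).
    by apply: ge0_ler_powR; rewrite ?nnegrE //; lra.
  have h5 : (y - t) `^ r = (y - t) * (y - t) `^ (r - 1).
    by rewrite mulr_powRB1 //; lra.
  have h6 : 0 <= A `^ r by apply: powR_ge0.
  have h7 : (y - t - 1) * (y - t - 1) `^ (r - 1) <= (y - t - 1) * (y - t) `^ (r - 1).
    by apply: ler_wpM2l => //; lra.
  have h8 : 0 <= (y - t) `^ (r - 1) by apply: powR_ge0.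
  nra.
- rewrite addr0.
  have [ys|ys] := leP (K + 1) y.
  + have h1 : `|y - (K + 1)| `^ r <= `|y - t| `^ r.
      apply: ge0_ler_powR; rewrite ?nnegrE //.
      by rewrite !ger0_norm; lra.
    by have := powR_ge0 A r; lra.
  + have h1 : `|y - (K + 1)| `^ r <= A `^ r.
      apply: ge0_ler_powR; rewrite ?nnegrE //.
      by rewrite ler0_norm; lra.
    by have := powR_ge0 `|y - t| r; lra.
Qed.

Section core.
Context {R : realType} {d : measure_display} {T : measurableType d}.
Variable mu : {measure set T -> \bar R}.
Hypothesis mu_gt0 : (0 < mu setT)%E.
Hypothesis mu_fin : (mu setT < +oo)%E.

Definition NN (r : R) (h : T -> R) := Lnorm mu r%:E (EFin \o h).
Definition muR := fine (mu setT).

Lemma muRE : mu setT = muR%:E.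
Proof. by rewrite fineK // ge0_fin_numE. Qed.

Lemma muR_gt0 : 0 < muR.
Proof. by rewrite -lte_fin -muRE. Qed.

Lemma Ncst r c : 0 < r -> NN r (cst c) = (`|c| * muR `^ r^-1)%:E.
Proof.
move=> r0; rewrite /NN unlock /=.

rewrite integral_cst // muRE -EFinM poweR_EFin powRM ?powR_ge0 //.
rewrite -powRrM mulfV ?gt_eqF // powRr1 //.
exact: ltW muR_gt0.
Qed.


Variable g : T -> R.
Hypothesis mg : measurable_fun setT g.
Hypothesis gL : forall r, 1 <= r -> (NN r g < +oo)%E.

Definition phi r t := NN r (fun x => g x - t).
Definition minz r t := forall s, (phi r t <= phi r s)%E.

Lemma mgt t : measurable_fun setT (fun x => g x - t).
Proof. by apply: measurable_funB. Qed.

Lemma phi_split r s t : 1 <= r ->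
  (phi r t <= phi r s + (`|s - t| * muR `^ r^-1)%:E)%E.
Proof.
move=> r1; rewrite /phi -Ncst ?(lt_le_trans ltr01 r1) //.
rewrite (_ : (fun x => g x - t) = ((fun x => g x - s) \+ cst (s - t))%R); last first.
  by apply/funext => x /=; rewrite addrA subrK.
exact: minkowski_EFin (mgt s) (measurable_cst _) r1.
Qed.

Lemma phi0 r : phi r 0 = NN r g.
Proof. by rewrite /phi; congr NN; apply/funext => x; rewrite subr0. Qed.

Lemma phi_lty r t : 1 <= r -> (phi r t < +oo)%E.
Proof.
move=> r1; apply: (le_lt_trans (phi_split 0 t r1)).
by rewrite phi0 lte_add_pinfty ?gL // ltry.
Qed.

Lemma phi_fin r t : 1 <= r -> phi r t \is a fin_num.
Proof. by move=> r1; rewrite ge0_fin_numE ?phi_lty //; exact: Lnorm_ge0. Qed.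

Lemma phi_coer r t : 1 <= r ->
  ((`|t| * muR `^ r^-1)%:E <= NN r g + phi r t)%E.
Proof.
move=> r1; rewrite -Ncst ?(lt_le_trans ltr01 r1) //.
have -> : phi r t = NN r (fun x => - (g x - t)).
  rewrite /phi /NN -[in RHS]oppe_Lnorm; congr Lnorm.
  by apply/funext => x /=; rewrite opprK.
rewrite (_ : cst t = (g \+ (fun x => - (g x - t)))%R); last first.
  by apply/funext => x /=; rewrite opprB addrC subrK.
apply: minkowski_EFin mg _ r1.
exact: measurableT_comp (mgt t).
Qed.

Definition Phi r t := fine (phi r t).

Lemma Phi_split r s t : 1 <= r -> Phi r t <= Phi r s + `|s - t| * muR `^ r^-1.
Proof.
move=> r1; rewrite -lee_fin EFinD /Phi !fineK ?phi_fin //; exact: phi_split.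
Qed.

Lemma Phi_cont r : 1 <= r -> continuous (Phi r).
Proof.
move=> r1 x; apply/cvgrPdist_lt => e e0.
have k0 : 0 < muR `^ r^-1 by rewrite powR_gt0 // muR_gt0.
have : \forall y \near x, `|x - y| < e / muR `^ r^-1.
  by apply: (@cvgr_dist_lt _ _ _ (nbhs x) _ id x) => //; rewrite divr_gt0.
apply: filterS => y xy.
have h1 := Phi_split y x r1; have h2 := Phi_split x y r1.
have : `|x - y| * muR `^ r^-1 < e by rewrite -ltr_pdivlMr.
rewrite distrC in h1.
move=> h3; rewrite ltr_norml; apply/andP; split; lra.
Qed.

Lemma minz_ex r : 1 <= r -> exists t, minz r t.
Proof.
move=> r1.
have k0 : 0 < muR `^ r^-1 by rewrite powR_gt0 // muR_gt0.
set B := 2 * fine (NN r g) / muR `^ r^-1.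
have B0 : 0 <= B.
  rewrite /B divr_ge0 ?(ltW k0) // mulr_ge0 // fine_ge0 //; exact: Lnorm_ge0.
have BB : - B <= B by lra.
have [c cB cmin] := EVT_min BB (continuous_subspaceT (Phi_cont r1)).
have Gfin : NN r g \is a fin_num by rewrite -phi0 phi_fin.
have PhiE u : phi r u = (Phi r u)%:E by rewrite /Phi fineK ?phi_fin.
have Phi0 : Phi r 0 = fine (NN r g) by rewrite /Phi phi0.
exists c => s; rewrite !PhiE lee_fin.
have [sB|sB] := boolP (s \in `[- B, B]); first exact: cmin.
have c0 : Phi r c <= Phi r 0 by apply: cmin; rewrite in_itv /=; lra.
have := phi_coer s r1; rewrite PhiE -(fineK Gfin) -EFinD lee_fin => hs.
have : B < `|s|.
  rewrite ltNge; apply/negP => sB'; move: sB; rewrite in_itv /= -ler_norml.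
  by rewrite sB'.
rewrite /B ltr_pdivrMr // => h.
lra.
Qed.



Definition Ig r t := (\int[mu]_x (`|g x - t| `^ r)%:E)%E.

Lemma mIg r t : measurable_fun setT (fun x => (`|g x - t| `^ r)%:E).
Proof.
apply/measurable_EFinP.
apply: (@measurableT_comp _ _ _ _ _ _ (@powR R ^~ r)) => //.
apply: measurableT_comp => //; exact: mgt.
Qed.

Lemma Ig_ge0 r t : (0 <= Ig r t)%E.
Proof. by apply: integral_ge0 => x _; rewrite lee_fin powR_ge0. Qed.

Lemma phiIg r t : phi r t = (Ig r t `^ r^-1)%E.
Proof.
rewrite /phi /NN unlock /Ig; by congr poweR.
Qed.

Lemma Ig_fin r t : 1 <= r -> Ig r t \is a fin_num.
Proof.
move=> r1; have r0 : r != 0 by rewrite gt_eqF // (lt_le_trans ltr01 r1).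
have : (phi r t `^ r)%E \is a fin_num by rewrite fin_num_poweR // phi_fin.
by rewrite /phi /NN powR_Lnorm //.
Qed.

Lemma not_minz r s t : 1 <= r -> (Ig r s < Ig r t)%E -> ~ minz r t.
Proof.
move=> r1 st /(_ s); apply/negP; rewrite -ltNge !phiIg.
rewrite -(fineK (Ig_fin s r1)) -(fineK (Ig_fin t r1)) !poweR_EFin lte_fin.
have r0 : 0 < r^-1 by rewrite invr_gt0 (lt_le_trans ltr01 r1).
apply: gt0_ltr_powR => //; rewrite ?nnegrE ?fine_ge0 ?Ig_ge0 //.
by rewrite -lte_fin !fineK ?Ig_fin.
Qed.

Lemma inf_pos (u : R) : (ess_inf mu (EFin \o g) < u%:E)%E ->
  (0 < mu (g @^-1` `]-oo, u[))%E.
Proof.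
move=> hu; rewrite lt0e measure_ge0 andbT; apply/negP => /eqP h0.
move: hu; apply/negP; rewrite -leNgt; apply/ess_infP.
exists (g @^-1` `]-oo, u[); split => //.
  by rewrite -[X in measurable X]setTI; apply: mg => //; exact: measurable_itv.
by move=> x /=; rewrite lee_fin in_itv /= leNgt => /negP /negbNE.
Qed.

Lemma sup_pos (u : R) : (u%:E < ess_sup mu (EFin \o g))%E ->
  (0 < mu (g @^-1` `]u, +oo[))%E.
Proof.
move=> hu; rewrite lt0e measure_ge0 andbT; apply/negP => /eqP h0.
move: hu; apply/negP; rewrite -leNgt; apply/ess_supP.
exists (g @^-1` `]u, +oo[); split => //.
  by rewrite -[X in measurable X]setTI; apply: mg => //; exact: measurable_itv.
by move=> x /=; rewrite lee_fin in_itv /= andbT leNgt => /negP /negbNE.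
Qed.


Lemma Ig_lower r t (E : set T) (k : R) : measurable E -> 0 <= r ->
  (forall x, E x -> k <= `|g x - t|) -> 0 <= k ->
  ((k `^ r)%:E * mu E <= Ig r t)%E.
Proof.
move=> mE r0 hk k0.
have H : (\int[mu]_(x in E) (`|g x - t| `^ r)%:E <= Ig r t)%E.
  by apply: ge0_subset_integral => //; exact: mIg.
apply: (le_trans _ H).
rewrite -integral_cst //; apply: ge0_le_integral => //.
- by move=> x _; rewrite lee_fin powR_ge0.
- exact: measurable_funS (mIg r t).
- move=> x Ex; rewrite lee_fin; apply: ge0_ler_powR; rewrite ?nnegrE //.
  exact: hk.
Qed.

Lemma Ig_upper r t (k : R) : 0 <= r -> (\forall x \ae mu, `|g x - t| <= k) ->
  (Ig r t <= (k `^ r * muR)%:E)%E.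
Proof.
move=> r0 hk.
rewrite EFinM -muRE -integral_cst //; apply: ae_ge0_le_integral => //.
- exact: mIg.
- by move=> x _; rewrite lee_fin powR_ge0.
- apply: filterS hk => x hx _; rewrite lee_fin; apply: ge0_ler_powR; rewrite ?nnegrE //.
  exact: le_trans hx.
Qed.

Lemma bounded_case (m M : R) :
  ess_inf mu (EFin \o g) = m%:E -> ess_sup mu (EFin \o g) = M%:E ->
  forall e, 0 < e ->
  \forall r \near +oo, forall t, minz r t -> `|(m + M) / 2 - t| < e.
Proof.
move=> hm hM e e0.
have aem : \forall x \ae mu, m <= g x.
  by have := ess_inf_le mu (EFin \o g); rewrite hm; apply: filterS => x /=; rewrite lee_fin.
have aeM : \forall x \ae mu, g x <= M.
  by have := ess_sup_ge mu (EFin \o g); rewrite hM; apply: filterS => x /=; rewrite lee_fin.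
have PF := ae_properfilter_algebraOfSetsType mu_gt0.
have mM : m <= M.
  have [x [h1 h2]] := @filter_ex _ _ PF _
    (filterS2 _ (fun x (a : m <= g x) (b : g x <= M) => conj a b) aem aeM).
  exact: le_trans h1 h2.
have D0 : 0 <= (M - m) / 2 by rewrite divr_ge0 // subr_ge0.
pose E1 := g @^-1` `]-oo, m + e / 2[.
pose E2 := g @^-1` `]M - e / 2, +oo[.
have mE1 : measurable E1.
  by rewrite /E1 -[X in measurable X]setTI; apply: mg => //; exact: measurable_itv.
have mE2 : measurable E2.
  by rewrite /E2 -[X in measurable X]setTI; apply: mg => //; exact: measurable_itv.
have E1pos : (0 < mu E1)%E by apply: inf_pos; rewrite hm lte_fin; lra.
have E2pos : (0 < mu E2)%E by apply: sup_pos; rewrite hM lte_fin; lra.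
have Elty E : measurable E -> (mu E < +oo)%E.
  move=> mE; apply: (le_lt_trans _ mu_fin).
  by apply: le_measure => //; rewrite inE.
have Efin E : measurable E -> mu E \is a fin_num.
  by move=> mE; rewrite ge0_fin_numE // Elty.
pose eta := Num.min (fine (mu E1)) (fine (mu E2)).
have eta0 : 0 < eta.
  by rewrite lt_min; apply/andP; split; apply: fine_gt0;
    rewrite ?E1pos ?E2pos /= Elty.
have etaE1 : (eta%:E <= mu E1)%E by rewrite -(fineK (Efin _ mE1)) lee_fin ge_min lexx.
have etaE2 : (eta%:E <= mu E2)%E by rewrite -(fineK (Efin _ mE2)) lee_fin ge_min lexx orbT.
have De : (M - m) / 2 < (M - m) / 2 + e / 2 by lra.
have ev := ev_pow D0 De (ltW muR_gt0) eta0.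
have r1 := nbhs_pinfty_gt (num_real (1 : R)).
apply: filterS2 r1 ev => r r1 hr t tmin.
rewrite ltNge; apply/negP => het.
have r1' : 1 <= r := ltW r1.
have r0 : 0 <= r by apply: le_trans r1'.
apply: (not_minz (s := (m + M) / 2) r1' _ tmin).
apply: (le_lt_trans (Ig_upper (k := (M - m) / 2) r0 _)).
  apply: filterS2 aem aeM => x h1 h2.
  rewrite ler_norml; apply/andP; split; lra.
apply: (lt_le_trans (y := (((M - m) / 2 + e / 2) `^ r * eta)%:E)).
  by rewrite lte_fin.
have Pk : 0 <= (M - m) / 2 + e / 2 by lra.
rewrite EFinM.
move: het; rewrite ler_normr => /orP[h|h].
- apply: (le_trans _ (Ig_lower mE2 r0 _ Pk)).
    by apply: lee_wpmul2l => //; rewrite lee_fin powR_ge0.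
  move=> x; rewrite /E2 /= in_itv /= andbT => hx.
  rewrite ler_normr; apply/orP; left; lra.
- apply: (le_trans _ (Ig_lower mE1 r0 _ Pk)).
    by apply: lee_wpmul2l => //; rewrite lee_fin powR_ge0.
  move=> x; rewrite /E1 /= in_itv /= => hx.
  rewrite ler_normr; apply/orP; right; lra.
Qed.


Lemma unbounded_case (m0 : R) : (\forall x \ae mu, m0 <= g x) ->
  ess_sup mu (EFin \o g) = +oo%E ->
  forall K, \forall r \near +oo, forall t, minz r t -> K < t.
Proof.
move=> aem hM K.
pose m1 := Num.min m0 K.
have aem1 : \forall x \ae mu, m1 <= g x.
  by apply: filterS aem => x hx; rewrite ge_min hx.
have m1K : m1 <= K by rewrite ge_min lexx orbT.
pose A := K + 1 - m1.
have A0 : 0 <= A by rewrite /A; lra.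
pose L := K + 2 * A + 2.
pose E := g @^-1` `]L, +oo[.
have mE : measurable E.
  by rewrite /E -[X in measurable X]setTI; apply: mg => //; exact: measurable_itv.
have Epos : (0 < mu E)%E by apply: sup_pos; rewrite hM ltry.
have Elty : (mu E < +oo)%E.
  apply: (le_lt_trans _ mu_fin).
  by apply: le_measure => //; rewrite inE.
have Efin : mu E \is a fin_num by rewrite ge0_fin_numE.
pose eta := fine (mu E).
have eta0 : 0 < eta by apply: fine_gt0; rewrite Epos Elty.
have etaE : mu E = eta%:E by rewrite fineK.
have AA : A < 2 * A + 2 by lra.
have b0 : 0 < eta / (2 * A + 2) by rewrite divr_gt0 //; lra.
have ev := ev_pow A0 AA (ltW muR_gt0) b0.
have r1 := nbhs_pinfty_gt (num_real (1 : R)).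
apply: filterS2 r1 ev => r r1 hr t tmin.
rewrite ltNge; apply/negP => tK.
have r1' : 1 <= r := ltW r1.
have r0 : 0 <= r by apply: le_trans r1'.
apply: (not_minz (s := K + 1) r1' _ tmin).
pose C := (2 * A + 2) `^ (r - 1).
have C0 : 0 <= C by apply: powR_ge0.
have key : (Ig r (K + 1) + C%:E * mu E <= Ig r t + (A `^ r)%:E * mu setT)%E.
  have mind : measurable_fun setT (fun x => (\1_E x)%:E : \bar R).
    by apply/measurable_EFinP; exact: measurable_indic.
  have E1 : (\int[mu]_x ((`|g x - (K + 1)| `^ r)%:E + C%:E * (\1_E x)%:E) =
      Ig r (K + 1) + C%:E * mu E)%E.
    rewrite ge0_integralD //; try solve [move=> x _; rewrite -?EFinM lee_fin ?powR_ge0 ?mulr_ge0 //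
      | exact: mIg | exact: emeasurable_funM (measurable_cst _) mind].
    rewrite ge0_integralZl_EFin //.
    by rewrite integral_indic // setIT.
  have E2 : (\int[mu]_x ((`|g x - t| `^ r)%:E + (A `^ r)%:E) =
      Ig r t + (A `^ r)%:E * mu setT)%E.
    rewrite ge0_integralD //; try solve [move=> x _; rewrite lee_fin ?powR_ge0 //
      | exact: mIg | exact: measurable_cst].
    by rewrite integral_cst.
  rewrite -E1 -E2; apply: ae_ge0_le_integral => //; try solve [
    move=> x _; apply: adde_ge0; rewrite -?EFinM lee_fin ?powR_ge0 ?mulr_ge0 //
   | apply: emeasurable_funD; [exact: mIg | first [exact: emeasurable_funM (measurable_cst _) mind | exact: measurable_cst]]].
  - apply: filterS aem1 => x hx _.
    rewrite -EFinM -!EFinD lee_fin.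
    have hy : K + 1 - A <= g x by rewrite /A; lra.
    have := pt_ineq r1' tK hy A0.
    rewrite indicE; case: (boolP (x \in E)) => xE.
      rewrite mulr1 => h; apply: le_trans h; rewrite lerD2l.
      by move: xE; rewrite inE /E /= in_itv /= andbT => ->.
    rewrite mulr0.
    move=> h; apply: le_trans h; rewrite lerD2l.
    by case: ifPn => // _; apply: powR_ge0.
have hC : C * eta = (2 * A + 2) `^ r * (eta / (2 * A + 2)).
  have h2 : 0 < 2 * A + 2 by lra.
  rewrite /C powRB; last by apply/implyP => _; rewrite gt_eqF.
  by rewrite powRr1 ?(ltW h2) // mulrAC -mulrA.
move: key; rewrite -(fineK (Ig_fin (K + 1) r1')) -(fineK (Ig_fin t r1')).
rewrite etaE muRE -!EFinM -!EFinD !lee_fin lte_fin => key.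
lra.
Qed.

End core.

Import HBNNSimple.
Section restr.
Context {d} {T : measurableType d} {R : realType} (mu : {measure set T -> \bar R}).
Variables (D : set T) (mD : measurable D).

Lemma mrestrDC : mrestr mu mD (~` D) = 0%E.
Proof. by rewrite /mrestr setICl measure0. Qed.

Lemma sint_proj (h : {nnsfun T >-> R}) :
  sintegral (mrestr mu mD) (proj_nnsfun h mD) = sintegral (mrestr mu mD) h.
Proof.
rewrite -!integralT_nnsfun.
transitivity (\int[mrestr mu mD]_(x in D) (h x)%:E)%E.
  rewrite [RHS]integral_mkcond; apply: eq_integral => x _.
  by rewrite -mrestrict !patchE; case: ifPn.
have := @ge0_negligible_integral _ _ _ (mrestr mu mD) setT (~` D) (EFin \o h)
  (measurableC mD) measurableT _ _ mrestrDC.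
rewrite setTD setCK => <- //.
- by apply/measurable_EFinP.
- by move=> x _; rewrite lee_fin.
Qed.

Lemma int_restr (F : T -> \bar R) : (forall x, 0 <= F x)%E ->
  (\int[mrestr mu mD]_x F x = \int[mrestr mu mD]_x (F \_ D) x)%E.
Proof.
move=> F0.
have FD0 x : (0 <= (F \_ D) x)%E by rewrite patchE; case: ifPn.
rewrite !ge0_integralTE //=.
apply/eqP; rewrite eq_le; apply/andP; split.
- apply: ge_ereal_sup => _ [h /= hF <-].
  apply: ereal_sup_ubound => /=; exists (proj_nnsfun h mD); last exact: sint_proj.
  move=> x /=; rewrite mindicE !patchE; case: ifPn => _; rewrite ?mulr1 ?mulr0 //; exact: hF.
- apply: le_ereal_sup => _ [h /= hF <-]; exists h => //= x.
  apply: (le_trans (hF x)); rewrite patchE; case: ifPn => //.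
Qed.

End restr.

Lemma phi_neg {R : realType} {d} {T : measurableType d} (mu : {measure set T -> \bar R})
  (g : T -> R) r t : phi mu (fun x => - g x) r t = phi mu g r (- t).
Proof.
rewrite /phi /NN -[RHS]oppe_Lnorm; congr Lnorm; apply/funext => x /=.
by congr EFin; ring.
Qed.


Lemma muI_T (R : realType) (a b : R) : a < b -> muI a b setT = (b - a)%:E.
Proof.
move=> ab; rewrite /muI /mrestr setTI lebesgue_measure_itv /= lte_fin ab.
by rewrite EFinB.
Qed.

Lemma Lnorm_patch (R : realType) (a b r : R) (h : R -> R) : 0 < r ->
  Lnorm (muI a b) r%:E (EFin \o h) =
  Lnorm (muI a b) r%:E (EFin \o (h \_ [set` `[a, b]])).
Proof.
move=> r0; rewrite unlock /muI; congr poweR.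
rewrite int_restr; last by move=> x; apply: poweR_ge0.
apply: eq_integral => x _; rewrite /= !patchE; case: ifPn => //= _.
by rewrite /point /= normr0 powR0 // gt_eqF.
Qed.


Lemma mg_lemma (R : realType) (a b : R) (f : R -> R) :
  measurable_fun `[a, b] f -> measurable_fun setT (f \_ [set` `[a, b]]).
Proof.
move=> mf.
have mI : measurable ([set` `[a, b]] : set R) by exact: measurable_itv.
exact/(measurable_restrictT f mI).
Qed.

Unset Implicit Arguments.

Theorem theorem4 (R : realType) (a b : R) (f : R -> R) :
  a < b ->
  measurable_fun `[a, b] f ->
  (forall r : R, 1 <= r -> finite_norm (muI a b) r%:E f) ->
  (finite_norm (muI a b) +oo%E (fneg f) \/ finite_norm (muI a b) +oo%E (fpos f)) ->
  (tau a b f r)%:E @[r --> +oo] -->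
    ((ess_inf (muI a b) (EFin \o f) + ess_sup (muI a b) (EFin \o f))
       * (2^-1)%:E)%E.
Proof.
move=> ab mf hL hpm.
pose g := f \_ [set` `[a, b]].
have mI : measurable [set` `[a, b]] := measurable_itv _.
have mg := mg_lemma mf.
have muT : muI a b setT = (b - a)%:E := muI_T ab.
have mu_gt0 : (0 < muI a b setT)%E by rewrite muT lte_fin subr_gt0.
have mu_fin : (muI a b setT < +oo)%E by rewrite muT ltry.
have gL : forall r, 1 <= r -> (NN (muI a b) r g < +oo)%E.
  move=> r r1; rewrite /NN -Lnorm_patch; first exact: (hL r r1).
  exact: lt_le_trans ltr01 r1.
have key r t : 0 < r -> LnormI a b r%:E (fun x => f x - t) = phi (muI a b) g r t.
  move=> r0; rewrite /LnormI /phi /NN Lnorm_patch // [RHS]Lnorm_patch //.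
  by congr Lnorm; apply/funext => x /=; rewrite /g !patchE; case: ifPn.
have tau_min r : 1 <= r -> minz (muI a b) g r (tau a b f r).
  move=> r1; have r0 : 0 < r := lt_le_trans ltr01 r1.
  rewrite /tau; set P := (X in xget 0 X).
  have -> : P = [set t | minz (muI a b) g r t].
    by apply/seteqP; split => t /= H s; have := H s; rewrite !key.
  apply: xgetPex; exact: (minz_ex mu_gt0 mu_fin mg gL r1).
have ae_fg : \forall x \ae muI a b, f x = g x.
  exists (~` [set` `[a, b]]); split.
  - exact: measurableC.
  - exact: mrestrDC.
  - by move=> x /= fx Ix; apply: fx; rewrite /g patchE mem_set.
have FF := ae_filter_ringOfSetsType (muI a b).
have hinf : ess_inf (muI a b) (EFin \o f) = ess_inf (muI a b) (EFin \o g).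
  by apply: eq_ess_inf; apply: (@filterS _ _ FF _ _ _ ae_fg) => x /= ->.
have hsup : ess_sup (muI a b) (EFin \o f) = ess_sup (muI a b) (EFin \o g).
  by apply: eq_ess_sup; apply: (@filterS _ _ FF _ _ _ ae_fg) => x /= ->.
rewrite hinf hsup.
have PF := ae_properfilter_algebraOfSetsType mu_gt0.
have infNy : ess_inf (muI a b) (EFin \o g) != +oo%E.
  apply/eqP => /ess_inf_eqyP h; have [x /= hx] := @filter_ex _ _ PF _ h.
  by move: hx.
have supNy : ess_sup (muI a b) (EFin \o g) != -oo%E.
  apply/eqP => /ess_sup_eqNyP h; have [x /= hx] := @filter_ex _ _ PF _ h.
  by move: hx.
have Cbound (h : R -> R) : finite_norm (muI a b) +oo%E h ->
    exists C : R, \forall x \ae muI a b, `|h x| <= C.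
  rewrite /finite_norm unlock mu_gt0 => hS.
  have [C hC] : exists C : R, (ess_sup (muI a b) (abse \o (EFin \o h)) <= C%:E)%E.
    move: hS; case: (ess_sup _ _) => [C _|//|_]; first by exists C.
    by exists 0; rewrite leNye.
  exists C; apply: filterS (ess_sup_ge (muI a b) (abse \o (EFin \o h))) => x hx.
  by rewrite -lee_fin -abse_EFin; apply: le_trans hC.
have r1near := nbhs_pinfty_gt (num_real (1 : R)).
have bnd (m M : R) : ess_inf (muI a b) (EFin \o g) = m%:E ->
    ess_sup (muI a b) (EFin \o g) = M%:E ->
    (tau a b f r)%:E @[r --> +oo] --> ((m%:E + M%:E) * (2^-1)%:E)%E.
  move=> Hm Hs; rewrite -EFinD -EFinM.
  apply: cvg_EFin; first by apply: nearW.
  apply/cvgrPdist_lt => e e0.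
  have := bounded_case mu_gt0 mu_fin mg gL Hm Hs e0.
  move=> HB; apply: filterS2 r1near HB => r r1 H /=.
  exact: H _ (tau_min r (ltW r1)).
case: hpm => [hn|hp].
- have [C hC] := Cbound _ hn.
  have aeg : \forall x \ae muI a b, - C <= g x.
    apply: filterS2 ae_fg hC => x <- h; rewrite /fneg in h.
    have h1 : - f x <= Num.max (- f x) 0 by rewrite le_max lexx.
    have h2 := ler_norm (Num.max (- f x) 0).
    lra.
  have infge : ((- C)%:E <= ess_inf (muI a b) (EFin \o g))%E.
    by apply/ess_infP; apply: filterS aeg => x; rewrite lee_fin.
  move: infge infNy; case Hm : (ess_inf _ _) => [m| |] // _ _.
  move: supNy; case Hs : (ess_sup _ _) => [M| |] // _.
    exact: bnd.
  rewrite addey // gt0_mulye ?lte_fin ?invr_gt0 //.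
  apply/cvgeyPgt => A.
  have := unbounded_case mu_gt0 mu_fin mg gL aeg Hs A.
  move=> HB; apply: filterS2 r1near HB => r r1 H /=.
  rewrite lte_fin; exact: H _ (tau_min r (ltW r1)).
- have [C hC] := Cbound _ hp.
  have aeg : \forall x \ae muI a b, g x <= C.
    apply: filterS2 ae_fg hC => x <- h; rewrite /fpos in h.
    have h1 : f x <= Num.max (f x) 0 by rewrite le_max lexx.
    have h2 := ler_norm (Num.max (f x) 0).
    lra.
  have supge : (ess_sup (muI a b) (EFin \o g) <= C%:E)%E.
    by apply/ess_supP; apply: filterS aeg => x; rewrite lee_fin.
  move: supge supNy; case Hs : (ess_sup _ _) => [M| |] // _ _.
  move: infNy; case Hm : (ess_inf _ _) => [m| |] // _.
    exact: bnd.
  rewrite addNye gt0_mulNye ?lte_fin ?invr_gt0 //.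
  pose g' := fun x => - g x.
  have mg' : measurable_fun setT g' by apply: measurable_funN.
  have gE : EFin \o g' = (\- (EFin \o g))%E by apply/funext => x.
  have gL' : forall r, 1 <= r -> (NN (muI a b) r g' < +oo)%E.
    by move=> r r1; rewrite /NN gE oppe_Lnorm; exact: gL.
  have aeg' : \forall x \ae muI a b, - C <= g' x.
    by apply: filterS aeg => x hx; rewrite /g' lerN2.
  have Hs' : ess_sup (muI a b) (EFin \o g') = +oo%E.
    by rewrite gE ess_supN Hm.
  apply/cvgeNyPlt => A.
  have := unbounded_case mu_gt0 mu_fin mg' gL' aeg' Hs' (- A).
  move=> HB; apply: filterS2 r1near HB => r r1 H /=.
  have hm : minz (muI a b) g' r (- tau a b f r).
    by move=> s; rewrite !phi_neg opprK; apply: (tau_min r (ltW r1)).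
  have := H _ hm; rewrite lte_fin ltrN2 => //.
Qed.
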